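(* Let $K\ge2$, $n\ge1$, and let $\pi$ be a probability distribution on $[K]^n$. Then for all $c\neq c'$ in $[K]^n$ with $\pi(c)>0$, \[ P_{\mathrm{R}}(c,c')\;\ge\;\frac{1}{2(K-1)}\,P_{\mathrm{MG}}(c,c'). \]
   Context: Notation: $[K]=\{1,\dots,K\}$; $n_k(c)=\#\{i:c_i=k\}$; $c_{-i}$ is $c$ without its $i$-th entry, $(c_{-i},k)$ is $c$ with $c_i$ replaced by $k$; $\pi(c_i=k\mid c_{-i})=\pi((c_{-i},k))/\sum_{j}\pi((c_{-i},j))$. $\mathcal{K}=\{(k,k')\in[K]^2:k<k'\}$, $p_c(k,k')=\frac{n_k(c)+n_{k'}(c)}{(K-1)n}$. $r(c,i,k_-,k_+)=\frac{n_{k_-}(c)}{n_{k_+}(c)+1}\cdot\frac{\pi(c_i=k_+\mid c_{-i})}{\pi(c_i=k_-\mid c_{-i})}$. $P_{\mathrm{MG}}(c,c')=\frac1n\sum_{i=1}^n\mathbb 1(c'_{-i}=c_{-i})\pi(c_i=c'_i\mid c_{-i})$ (random-scan Gibbs sampler). $P_{\mathrm{R}}$: from $c$, sample $(k,k')\sim p_c$; set $(k_-,k_+)=(k,k')$ or $(k',k)$ with probability $1/2$ each; if $n_{k_-}(c)=0$ stay at $c$; otherwise pick $i$ uniformly from $\{i':c_{i'}=k_-\}$ and move to $(c_{-i},k_+)$ with probability $\min\{1,r(c,i,k_-,k_+)\}$, else stay at $c$. *)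

(* Defs.v *)
From HB Require Import structures.
From mathcomp Require Import all_boot all_order all_algebra.
Set Implicit Arguments. Unset Strict Implicit. Unset Printing Implicit Defensive.
Import Order.TTheory GRing.Theory Num.Theory.
Local Open Scope ring_scope.

Section Defs.
Variables (R : realFieldType) (n K : nat).

(* configurations c in [K]^n; labels 1..K are represented by 'I_K = {0..K-1} *)
Definition config := {ffun 'I_n -> 'I_K}.

Definition upd (c : config) (i : 'I_n) (k : 'I_K) : config :=
  [ffun j => if j == i then k else c j].

Definition nk (c : config) (k : 'I_K) : nat := #|[pred i | c i == k]|.

Definition is_dist (pi : config -> R) : Prop :=
  (forall c, 0 <= pi c) /\ \sum_(c : config) pi c = 1.

Definition condp (pi : config -> R) (c : config) (i : 'I_n) (k : 'I_K) : R :=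
  pi (upd c i k) / \sum_(j : 'I_K) pi (upd c i j).

Definition P_MG (pi : config -> R) (c c' : config) : R :=
  n%:R^-1 * \sum_(i : 'I_n)
    ((c' == upd c i (c' i))%:R * condp pi c i (c' i)).

Definition pc (c : config) (k k' : 'I_K) : R :=
  (nk c k + nk c k')%:R / ((K - 1) * n)%:R.

Definition rratio (pi : config -> R) (c : config) (i : 'I_n) (km kp : 'I_K) : R :=
  (nk c km)%:R / ((nk c kp)%:R + 1) * (condp pi c i kp / condp pi c i km).

(* probability of going from c to c' once the ordered pair (k_-,k_+) is chosen *)
Definition move_prob (pi : config -> R) (c c' : config) (km kp : 'I_K) : R :=
  if nk c km == 0%N then (c' == c)%:R
  else (nk c km)%:R^-1 *
       \sum_(i : 'I_n | c i == km)
          (Num.min 1 (rratio pi c i km kp) * (c' == upd c i kp)%:R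
           + (1 - Num.min 1 (rratio pi c i km kp)) * (c' == c)%:R).

Definition P_R (pi : config -> R) (c c' : config) : R :=
  \sum_(k : 'I_K) \sum_(k' : 'I_K | (k < k')%N)
     pc c k k' * (2^-1 * move_prob pi c c' k k' + 2^-1 * move_prob pi c c' k' k).

End Defs.

(* Main.v *)
Require Import Defs.
From HB Require Import structures.
From mathcomp Require Import all_boot all_order all_algebra.
From mathcomp Require Import ring lra.
Import Order.TTheory GRing.Theory Num.Theory.
Local Open Scope ring_scope.
Set Implicit Arguments. Unset Strict Implicit.

Lemma core (R : realFieldType) (a b p q : R) : 1 <= a -> 0 <= b -> 0 < p -> p <= 1 -> 0 <= q -> q <= 1 ->
  q <= (a+b)/a * Num.min 1 (a/(b+1) * (q/p)).
Proof.
move=> a1 b0 p0 p1 q0 q1.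
have ha : a != 0 by apply/eqP => h; rewrite h in a1; lra.
have hb : b + 1 != 0 by apply/eqP => h; lra.
have hp : p != 0 by apply/eqP => h; lra.
have [h|h] := leP 1 (a/(b+1) * (q/p)).
- 
  rewrite mulr1.
  set z := (a+b)/a. have hz : z * a = a + b by rewrite /z mulfVK.
  nra.
- 
  have -> : (a+b)/a * (a/(b+1) * (q/p)) = ((a+b)/(b+1)) * (q/p) by rewrite !mulrA -(mulrA _ a^-1 a) mulVf // mulr1.
  set y := (a+b)/(b+1). have hy : y * (b+1) = a + b by rewrite /y mulfVK.
  set x := q/p. have hx : x * p = q by rewrite /x mulfVK.
  have x0 : 0 <= x by rewrite /x divr_ge0 // ltW.
  have y1 : 1 <= y.
    rewrite -subr_ge0. have : 0 <= (y - 1) * (b + 1) by rewrite mulrBl hy mul1r; lra.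
    by rewrite pmulr_lge0 //; lra.
  have : 0 <= (1 - p) * x by apply: mulr_ge0 => //; lra.
  have : 0 <= (y - 1) * x by apply: mulr_ge0 => //; lra.
  nra.
Qed.

Section S.
Variables (R : realFieldType) (K n : nat) (pi : config n K -> R).
Hypothesis pi0 : forall c, 0 <= pi c.

Lemma condp_ge0 c i k : 0 <= condp pi c i k.
Proof. by rewrite /condp divr_ge0 // sumr_ge0. Qed.

Lemma condp_le1 c i k : condp pi c i k <= 1.
Proof.
rewrite /condp; have [->|S0] := eqVneq (\sum_(j : 'I_K) pi (upd c i j)) 0.
  by rewrite invr0 mulr0.
have Sp : 0 < \sum_(j : 'I_K) pi (upd c i j) by rewrite lt0r S0 sumr_ge0.
rewrite ler_pdivrMr // mul1r (bigD1 k) //= lerDl sumr_ge0 //.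
Qed.

Lemma rratio_ge0 c i km kp : 0 <= rratio pi c i km kp.
Proof. by rewrite /rratio mulr_ge0 // divr_ge0 ?condp_ge0 ?addr_ge0. Qed.

Lemma minr_ge0 c i km kp : 0 <= Num.min 1 (rratio pi c i km kp).
Proof. by rewrite le_min ler01 rratio_ge0. Qed.

Lemma minr_le1 c i km kp : Num.min 1 (rratio pi c i km kp) <= 1.
Proof. by rewrite ge_min lexx. Qed.

Lemma move_prob_ge0 c c' km kp : 0 <= move_prob pi c c' km kp.
Proof.
rewrite /move_prob; case: ifP => _; first by rewrite ler0n.
rewrite mulr_ge0 ?invr_ge0 // sumr_ge0 // => i _.
rewrite addr_ge0 // mulr_ge0 ?minr_ge0 ?subr_ge0 ?minr_le1 //.
Qed.

Lemma pc_ge0 (c : config n K) k k' : 0 <= pc R c k k'.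
Proof. by rewrite /pc divr_ge0. Qed.

Lemma P_R_ge0 c c' : 0 <= P_R pi c c'.
Proof.
rewrite /P_R sumr_ge0 // => k _; rewrite sumr_ge0 // => k' _.
by rewrite mulr_ge0 ?pc_ge0 // addr_ge0 // mulr_ge0 ?invr_ge0 ?move_prob_ge0.
Qed.

Lemma P_R_ge c c' km kp : km != kp ->
  pc R c km kp * (2^-1 * move_prob pi c c' km kp) <= P_R pi c c'.
Proof.
move=> neq.
have key : forall a b : 'I_K, (a < b)%N ->
   pc R c a b * (2^-1 * move_prob pi c c' a b + 2^-1 * move_prob pi c c' b a) <= P_R pi c c'.
  move=> a b ab; rewrite /P_R (bigD1 a) //= (bigD1 b) //=.
  rewrite -addrA lerDl addr_ge0 // sumr_ge0 // => [k' _|k _]; last rewrite sumr_ge0 // => k' _;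
  by rewrite mulr_ge0 ?pc_ge0 // addr_ge0 // mulr_ge0 ?invr_ge0 ?move_prob_ge0.
have h2 : forall x y : R, 0 <= y -> 2^-1 * x <= 2^-1 * x + 2^-1 * y.
  by move=> x y y0; rewrite lerDl mulr_ge0 // invr_ge0.
have [lt|gt] := ltnP km kp.
  apply: le_trans (key _ _ lt); apply: ler_wpM2l; first exact: pc_ge0.
  by apply: h2; apply: move_prob_ge0.
have lt : (kp < km)%N by rewrite ltn_neqAle gt andbT eq_sym; apply/eqP => /val_inj/eqP; rewrite (negbTE neq).
apply: le_trans (key _ _ lt); rewrite /pc addnC; apply: ler_wpM2l.
  by rewrite divr_ge0.
by rewrite addrC; apply: h2; apply: move_prob_ge0.
Qed.

End S.

Theorem mainTheorem2 (R : realFieldType) (K n : nat) :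
  (2 <= K)%N -> (1 <= n)%N ->
  forall pi : config n K -> R, is_dist pi ->
  forall c c' : config n K, c != c' -> 0 < pi c ->
  (2 * (K - 1)%:R)^-1 * P_MG pi c c' <= P_R pi c c'.
Proof.
move=> K2 n1 pi [pi0 _] c c' cc' pic.
case: (pickP (fun i => c' == upd c i (c' i))) => [i0 hi0|none]; last first.
  rewrite /P_MG big1 ?mulr0; first (exact: (P_R_ge0 pi0 c c')). move=> i _.
  by rewrite none mul0r.
have updK : forall i, upd c i (c i) = c.
  by move=> i; apply/ffunP => j; rewrite ffunE; case: eqP => // ->.
set km := c i0; set kp := c' i0.
have neq : km != kp.
  apply/eqP => e; move: hi0; rewrite -/kp -e /km updK => /eqP e'.
  by rewrite e' eqxx in cc'.
have PMG : P_MG pi c c' = n%:R^-1 * condp pi c i0 kp.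
  rewrite /P_MG (bigD1 i0) //= hi0 mul1r big1 ?addr0 // => i ni.
  case: eqP => [e|]; last by rewrite mul0r.
  exfalso; move/eqP: neq; apply.
  by rewrite /kp e ffunE eq_sym (negbTE ni).
rewrite PMG; apply: le_trans; last exact: (P_R_ge pi0 c c' neq).
have nz : nk c km != 0%N.
  by rewrite -lt0n; apply/card_gt0P; exists i0; rewrite inE.
have mp : (nk c km)%:R^-1 * Num.min 1 (rratio pi c i0 km kp) <= move_prob pi c c' km kp.
  rewrite /move_prob (negbTE nz); apply: ler_wpM2l; first by rewrite invr_ge0.
  rewrite (bigD1 i0) /=; last by rewrite eqxx.
  rewrite hi0 eq_sym (negbTE cc') mulr1 mulr0 addr0 lerDl sumr_ge0 // => i _.
  by rewrite addr_ge0 // mulr_ge0 ?(minr_ge0 pi0) ?subr_ge0 ?minr_le1.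
apply: le_trans (_ : _ <= pc R c km kp * (2^-1 * ((nk c km)%:R^-1 * Num.min 1 (rratio pi c i0 km kp)))) _; last first.
  by apply: ler_wpM2l; [exact: pc_ge0| apply: ler_wpM2l => //; rewrite invr_ge0].
have pkm : 0 < condp pi c i0 km.
  rewrite /condp /km updK divr_gt0 //.
  by apply: lt_le_trans pic _; rewrite (bigD1 (c i0)) //= updK lerDl sumr_ge0.
have a1 : 1 <= (nk c km)%:R :> R by rewrite ler1n lt0n.
have := core a1 (ler0n _ (nk c kp)) pkm (condp_le1 pi0 c i0 km) (condp_ge0 pi0 c i0 kp) (condp_le1 pi0 c i0 kp).
rewrite /pc /rratio natrD natrM.
move: (condp pi c i0 kp) (condp pi c i0 km) => q p.
set A := (nk c km)%:R; set B := (nk c kp)%:R; set M := Num.min _ _.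
have hA : A != 0 by rewrite /A pnatr_eq0.
have hK : (K - 1)%:R != 0 :> R by rewrite pnatr_eq0 -lt0n subn_gt0.
have hN : n%:R != 0 :> R by rewrite pnatr_eq0 -lt0n.
pose C : R := (2 * (K - 1)%:R * n%:R)^-1.
have C0 : 0 <= C by rewrite /C invr_ge0 !mulr_ge0 ?ler0n.
have -> : (2 * (K - 1)%:R)^-1 * (n%:R^-1 * q) = C * q.
  by rewrite /C !invfM !mulrA.
have -> : (A + B) / ((K - 1)%:R * n%:R) * (2^-1 * (A^-1 * M)) = C * ((A + B) / A * M).
  by rewrite /C !invfM; field; rewrite hN hK pnatr_eq0 nz.
move=> h; exact: ler_wpM2l.
Qed.
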